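(* Let $(X,\Sigma)$ be a measurable space and $p$ a transition function on it with associated operator $A$ on $ba(X,\Sigma)$. Suppose the Markov chain has a singular cycle of sets of states $S=\{D_1,\dots,D_m\}$. Then $A$ has a singular cycle of finitely additive measures $K=\{\mu_1,\dots,\mu_m\}\subset S_{ba}$ such that $\mu_i(D_j)=1$ if $i=j$ and $\mu_i(D_j)=0$ if $i\ne j$.
   Context: $X$ is an arbitrary infinite set and $\Sigma$ a $\sigma$-algebra of subsets of $X$ containing all one-point sets. $ba(X,\Sigma)$ denotes the space of bounded finitely additive real-valued measures on $\Sigma$, and $S_{ba}=\{\mu\in ba(X,\Sigma):\mu\ge0,\ \mu(X)=1\}$. A transition function is a map $p(x,E)$ with $0\le p(x,E)\le1$, $p(x,X)=1$, $p(\cdot,E)$ bounded $\Sigma$-measurable for every $E\in\Sigma$, and $p(x,\cdot)$ countably additive for every $x\in X$. The Markov operator is $A\mu(E)=\int_X p(x,E)\,\mu(dx)$. A cycle of measures of $A$ is a finite numbered set $\{\mu_1,\dots,\mu_m\}$ of pairwise different positive finitely additive measures with $A\mu_i=\mu_{i+1}$ ($1\le i\le m-1$), $A\mu_m=\mu_1$; it is singular if its measures are pairwise singular, where positive $\mu,\nu$ are singular if there are disjoint $D,D'\in\Sigma$ with $\mu(D)=\mu(X)$, $\nu(D')=\nu(X)$. A cycle of sets of states is a system of pairwise distinct sets $D_1,\dots,D_m\in\Sigma$ with $p(x,D_{i+1})=1$ for all $x\in D_i$ ($1\le i\le m-1$) and $p(x,D_1)=1$ for all $x\in D_m$; it is singular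 if $D_i\cap D_j=\emptyset$ for $i\ne j$. *)

(* Defs.v *)
From mathcomp Require Import all_boot all_order all_algebra.
From mathcomp Require Import all_classical all_reals all_analysis.
Import Order.TTheory GRing.Theory Num.Theory numFieldNormedType.Exports.
Local Open Scope classical_set_scope.
Local Open Scope ring_scope.

Section Defs.
Context {d : measure_display} {T : measurableType d} {R : realType}.

(* finitely additive set functions on the sigma-algebra of T
   (only values on measurable sets matter) *)
Definition fin_additive (mu : set T -> R) : Prop :=
  forall A B, measurable A -> measurable B -> A `&` B = set0 ->
    mu (A `|` B) = mu A + mu B.

Definition bounded_sf (mu : set T -> R) : Prop :=
  exists M : R, forall A, measurable A -> `|mu A| <= M.

Definition ba_measure (mu : set T -> R) : Prop :=
  fin_additive mu /\ bounded_sf mu.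

Definition positive_ba (mu : set T -> R) : Prop :=
  ba_measure mu /\ (forall A, measurable A -> 0 <= mu A).

Definition S_ba (mu : set T -> R) : Prop :=
  positive_ba mu /\ mu setT = 1.

Definition meq (mu nu : set T -> R) : Prop :=
  forall E, measurable E -> mu E = nu E.

Definition singular_ba (mu nu : set T -> R) : Prop :=
  exists D D' : set T, [/\ measurable D, measurable D', D `&` D' = set0,
    mu D = mu setT & nu D' = nu setT].

Definition transition_function (p : T -> set T -> R) : Prop :=
  [/\ (forall x E, measurable E -> 0 <= p x E <= 1),
      (forall x, p x setT = 1),
      (forall E, measurable E -> measurable_fun setT (fun x => p x E))
    & (forall x (F : nat -> set T), (forall n, measurable (F n)) ->
        trivIset setT F ->
        (fun n => \sum_(0 <= k < n) p x (F k)) @ \oo --> p x (\bigcup_n F n))].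

Definition fa_integral (mu : set T -> R) (f : T -> R) : R :=
  sup [set r | exists (n : nat) (P : 'I_n -> set T),
    [/\ (forall i, measurable (P i)),
        (forall i j, i != j -> P i `&` P j = set0),
        (forall x, exists i, P i x)
      & r = \sum_(i < n) inf (f @` P i) * mu (P i)]].

Definition markov_op (p : T -> set T -> R) (mu : set T -> R) : set T -> R :=
  fun E => fa_integral mu (fun x => p x E).

(* cycle of measures mu_0, ..., mu_{m-1} (indices shifted by one) *)
Definition cycle_measures (p : T -> set T -> R) (m : nat)
    (mu : nat -> set T -> R) : Prop :=
  [/\ (forall i, (i < m)%N -> positive_ba (mu i)),
      (forall i j, (i < m)%N -> (j < m)%N -> i != j -> ~ meq (mu i) (mu j))
    & (forall i, (i < m)%N -> meq (markov_op p (mu i)) (mu (i.+1 %% m)%N))].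

Definition singular_cycle_measures (p : T -> set T -> R) (m : nat)
    (mu : nat -> set T -> R) : Prop :=
  cycle_measures p m mu /\
  (forall i j, (i < m)%N -> (j < m)%N -> i != j -> singular_ba (mu i) (mu j)).

Definition cycle_sets (p : T -> set T -> R) (m : nat) (D : nat -> set T) : Prop :=
  [/\ (forall i, (i < m)%N -> measurable (D i) /\ D i !=set0),
      (forall i j, (i < m)%N -> (j < m)%N -> i != j -> D i <> D j)
    & (forall i x, (i < m)%N -> D i x -> p x (D (i.+1 %% m)%N) = 1)].

Definition singular_cycle_sets (p : T -> set T -> R) (m : nat) (D : nat -> set T) : Prop :=
  cycle_sets p m D /\
  (forall i j, (i < m)%N -> (j < m)%N -> i != j -> D i `&` D j = set0).

End Defs.

(* Main.v *)
Require Import Defs.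
From mathcomp Require Import all_boot all_order all_algebra.
From mathcomp Require Import all_classical all_reals all_analysis.
From mathcomp Require Import lra.
Import Order.TTheory GRing.Theory Num.Theory numFieldNormedType.Exports.
Local Open Scope classical_set_scope.
Local Open Scope ring_scope.

Section Aux.
Context {d : measure_display} {T : measurableType d} {R : realType}.
Implicit Types (mu : set T -> R) (f : T -> R).

Definition prob mu := [/\ fin_additive mu,
  (forall A, measurable A -> 0 <= mu A) & mu setT = 1].

Lemma prob0 {mu} : prob mu -> mu set0 = 0.
Proof.
case=> ad _ _; have := ad set0 set0 measurable0 measurable0 (setI0 _).
rewrite setU0 => h; lra.
Qed.

Lemma mem_bigU (I : eqType) (r : seq I) (Q : I -> set T) x :
  (\big[setU/set0]_(i <- r) Q i) x -> exists i, i \in r /\ Q i x.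
Proof.
elim: r => [|i r IH]; first by rewrite big_nil.
rewrite big_cons => -[Qix|/IH [j [jr Qjx]]].
  by exists i; rewrite inE eqxx.
by exists j; rewrite inE jr orbT.
Qed.

Lemma prob_sumr {mu} (I : eqType) (r : seq I) (Q : I -> set T) A :
  prob mu -> uniq r -> (forall i, measurable (Q i)) ->
  (forall i j, i != j -> Q i `&` Q j = set0) -> measurable A ->
  mu (A `&` \big[setU/set0]_(i <- r) Q i) = \sum_(i <- r) mu (A `&` Q i).
Proof.
move=> pm; elim: r => [|i r IH] /=.
  by move=> *; rewrite !big_nil setI0 (prob0 pm).
move=> /andP[ir ur] mQ dQ mA; rewrite !big_cons setIUr.
have [ad _ _] := pm.
have mB : measurable (A `&` \big[setU/set0]_(j <- r) Q j).
  by apply: measurableI => //; apply: bigsetU_measurable.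
rewrite ad //; first by rewrite IH.
- exact: measurableI.
rewrite setIACA setIid; apply/seteqP; split => // x [_ [Qix]].
move/mem_bigU => [j [jr Qjx]].
have ij : i != j by apply/eqP => ij; move: ir; rewrite ij jr.
by have := dQ _ _ ij; move/seteqP => [+ _] => /(_ x (conj Qix Qjx)).
Qed.

Lemma cover_big (I : finType) (Q : I -> set T) :
  (forall x, exists i, Q i x) -> \big[setU/set0]_(i <- index_enum I) Q i = setT.
Proof.
move=> cQ; apply/seteqP; split => // x _.
have [i Qix] := cQ x.
have : i \in index_enum I by rewrite mem_index_enum.
elim: (index_enum I) => // j r IH; rewrite inE big_cons => /orP[/eqP <-|/IH].
  by left.
by right.
Qed.

Lemma prob_sum {mu} (I : finType) (Q : I -> set T) A :
  prob mu -> (forall i, measurable (Q i)) ->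
  (forall i j, i != j -> Q i `&` Q j = set0) -> (forall x, exists i, Q i x) ->
  measurable A -> mu A = \sum_(i : I) mu (A `&` Q i).
Proof.
move=> pm mQ dQ cQ mA.
rewrite -[in LHS](setIT A) -(cover_big _ _ cQ) prob_sumr //.
exact: index_enum_uniq.
Qed.

Lemma prob_ge0 {mu} A : prob mu -> measurable A -> 0 <= mu A.
Proof. by case=> _ + _; apply. Qed.

Lemma prob_le1 {mu} A : prob mu -> measurable A -> mu A <= 1.
Proof.
move=> pm mA; case: (pm) => ad _ <-.
rewrite -(setUv A) ad //; last by rewrite setICr.
  by rewrite lerDl prob_ge0 //; exact: measurableC.
exact: measurableC.
Qed.


Definition part (I : finType) (Q : I -> set T) := [/\ forall i, measurable (Q i),
  forall i j, i != j -> Q i `&` Q j = set0 & forall x, exists i, Q i x].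
Arguments part {I} Q.

Lemma lsum_ub {mu} f n (P : 'I_n -> set T) (I : finType) (Q : I -> set T) b :
  prob mu -> (forall x, 0 <= f x) -> part P -> part Q ->
  (forall i x, Q i x -> f x <= b i) ->
  \sum_(j < n) inf (f @` P j) * mu (P j) <= \sum_i b i * mu (Q i).
Proof.
move=> pm f0 [mP dP cP] [mQ dQ cQ] hb.
rewrite (eq_bigr (fun j => \sum_i inf (f @` P j) * mu (P j `&` Q i))); last first.
  by move=> j _; rewrite -mulr_sumr -prob_sum.
rewrite exchange_big /=; apply: ler_sum => i _.
rewrite (prob_sum _ P (Q i) pm) // mulr_sumr; apply: ler_sum => j _.
rewrite [X in _ <= _ * mu X]setIC.
case: (pselect (P j `&` Q i = set0)) => [->|/eqP/set0P [x [Pjx Qix]]].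
  by rewrite (prob0 pm) !mulr0.
apply: ler_wpM2r; first by apply: prob_ge0 => //; exact: measurableI.
apply: le_trans (_ : f x <= b i); last exact: hb.
apply: inf_lbound; last by exists x.
by exists 0 => _ [y _ <-]; exact: f0.
Qed.

Lemma part1 : part (fun _ : 'I_1 => @setT T).
Proof. by split => // [i j|x]; [rewrite !ord1 eqxx | exists ord0]. Qed.

Lemma integral_ub {mu} (I : finType) (Q : I -> set T) b f :
  prob mu -> (forall x, 0 <= f x) -> part Q ->
  (forall i x, Q i x -> f x <= b i) ->
  fa_integral mu f <= \sum_i b i * mu (Q i).
Proof.
move=> pm f0 pQ hb; apply: sup_le_ub.
  by exists (\sum_(i < 1) inf (f @` setT) * mu setT), 1%N, (fun _ => setT); case: part1.
move=> r [n [P [mP dP cP ->]]]; exact: lsum_ub.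
Qed.

Lemma integral_lb {mu} (I : finType) (Q : I -> set T) a f :
  prob mu -> (forall x, 0 <= f x <= 1) -> part Q ->
  (forall i x, Q i x -> a i <= f x) ->
  \sum_i a i * mu (Q i) <= fa_integral mu f.
Proof.
move=> pm f01 [mQ dQ cQ] ha.
apply: le_trans (_ : \sum_i inf (f @` Q i) * mu (Q i) <= _).
  apply: ler_sum => i _.
  case: (pselect (Q i = set0)) => [->|/eqP/set0P [x Qx]].
    by rewrite (prob0 pm) !mulr0.
  apply: ler_wpM2r; first exact: prob_ge0.
  apply: lb_le_inf; first by exists (f x), x.
  by move=> _ [y Qy <-]; exact: ha.
apply: sup_ubound.
  exists 1 => r [n [P [mP dP cP ->]]].
  have := @lsum_ub mu f n P _ (fun _ : 'I_1 => setT) (fun _ => 1) pm _ (And3 mP dP cP) part1.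
  have [_ _ ->] := pm; rewrite big_ord1 mul1r; apply.
  - by move=> x; case/andP: (f01 x).
  - by move=> _ x _; case/andP: (f01 x).
exists #|I|, (fun k => Q (enum_val k)); split => //.
- by move=> i j ij; apply: dQ; rewrite (inj_eq enum_val_inj).
- by move=> x; have [i Qix] := cQ x; exists (enum_rank i); rewrite enum_rankK.
- by rewrite big_enum_val.
Qed.

Definition Bk f (N : nat) (k : 'I_N.+1) :=
  [set x | k%:R / N%:R <= f x < k.+1%:R / N%:R].
Definition SN f mu N := \sum_(k < N.+1) (k%:R / N%:R) * mu (Bk f N k).

Lemma part_Bk f N : (0 < N)%N -> measurable_fun setT f ->
  (forall x, 0 <= f x <= 1) -> part (Bk f N).
Proof.
move=> N0 mf f01; have N0' : (0 : R) < N%:R by rewrite ltr0n.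
split.
- move=> k; have := mf measurableT _ (measurable_itv `[(k%:R / N%:R), (k.+1%:R / N%:R)[).
  rewrite setTI; congr measurable; apply/seteqP; split => x /=; rewrite in_itv //=.
- move=> i j ij; apply/seteqP; split => // x [/andP[ai bi] /andP[aj bj]].
  have h1 : i%:R / N%:R < j.+1%:R / N%:R :> R by apply: le_lt_trans bj.
  have h2 : j%:R / N%:R < i.+1%:R / N%:R :> R by apply: le_lt_trans bi.
  rewrite ltr_pM2r ?invr_gt0 // ltr_nat ltnS in h1.
  rewrite ltr_pM2r ?invr_gt0 // ltr_nat ltnS in h2.
  by move: ij; rewrite (_ : i = j) ?eqxx //; apply: val_inj; apply/eqP; rewrite eqn_leq h1 h2.
- move=> x; have /andP[f0 f1] := f01 x.
  have t0 : 0 <= N%:R * f x by rewrite mulr_ge0.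
  have /andP[tl tu] := truncn_itv t0.
  have kN : (Num.truncn (N%:R * f x) < N.+1)%N.
    rewrite ltnS -(ler_nat R); apply: (le_trans tl).
    by rewrite -[leRHS]mulr1 ler_wpM2l.
  exists (Ordinal kN) => /=; apply/andP; split.
    by rewrite ler_pdivrMr // [X in _ <= X]mulrC.
  by rewrite ltr_pdivlMr // [X in X < _]mulrC.
Qed.

Lemma SN_approx {mu} f N : prob mu -> (0 < N)%N -> measurable_fun setT f ->
  (forall x, 0 <= f x <= 1) ->
  SN f mu N <= fa_integral mu f <= SN f mu N + N%:R^-1.
Proof.
move=> pm N0 mf f01; have pB := part_Bk f N N0 mf f01.
apply/andP; split.
  by apply: (@integral_lb mu _ _ (fun k : 'I_N.+1 => k%:R / N%:R)) => // k x /andP[].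
apply: le_trans (@integral_ub mu _ _ (fun k : 'I_N.+1 => k.+1%:R / N%:R) f pm _ pB _) _.
- by move=> x; case/andP: (f01 x).
- by move=> k x /andP[_ h]; exact: ltW.
rewrite /SN (eq_bigr (fun k : 'I_N.+1 => (k%:R / N%:R) * mu (Bk f N k) + N%:R^-1 * mu (Bk f N k))); last first.
  by move=> k _; rewrite -addn1 natrD mulrDl mulrDl mul1r.
rewrite big_split /= -mulr_sumr.
have [mB dB cB] := pB.
have hs : \sum_(i < N.+1) mu (Bk f N i) = 1.
  have [_ _ <-] := pm; rewrite (prob_sum _ (Bk f N) setT pm) //.
  by apply: eq_bigr => k _; rewrite setTI.
by rewrite hs mulr1.
Qed.

Lemma eq_approx (a b : R) :
  (forall N, (0 < N)%N -> a <= b + N%:R^-1 /\ b <= a + N%:R^-1) -> a = b.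
Proof.
move=> h.
suff H : forall x y : R, (forall N, (0 < N)%N -> x <= y + N%:R^-1) -> x <= y.
  by apply/eqP; rewrite eq_le !H // => N N0; case: (h N N0).
move=> x y hN; apply/ler_addgt0Pr => e e0.
have ei0 : 0 <= e^-1 by rewrite invr_ge0 ltW.
have /andP[_ eN] := truncn_itv ei0.
apply: (le_trans (hN (Num.truncn e^-1).+1 (ltn0Sn _))); rewrite lerD2l invf_ple ?posrE ?ltr0n //.
exact: ltW.
Qed.

Definition bnd (u : nat -> R) := exists M, forall n, `|u n| <= M.

Definition posfun (Phi : (nat -> R) -> R) := [/\
  forall u v, bnd u -> bnd v -> Phi (fun n => u n + v n) = Phi u + Phi v,
  forall c u, bnd u -> Phi (fun n => c * u n) = c * Phi u,
  forall u v, bnd u -> bnd v -> (forall n, u n <= v n) -> Phi u <= Phi v &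
  Phi (fun _ => 1) = 1].

Lemma bnd01 (u : nat -> R) : (forall n, 0 <= u n <= 1) -> bnd u.
Proof.
move=> h; exists 1 => n; have /andP[h0 h1] := h n; by rewrite ger0_norm.
Qed.

Lemma bnd_cst (c : R) : bnd (fun _ => c).
Proof. by exists `|c|. Qed.

Lemma bndD (u v : nat -> R) : bnd u -> bnd v -> bnd (fun n => u n + v n).
Proof.
move=> [M hM] [K hK]; exists (M + K) => n.
by apply: le_trans (ler_normD _ _) _; apply: lerD.
Qed.

Lemma bndZ c (u : nat -> R) : bnd u -> bnd (fun n => c * u n).
Proof.
move=> [M hM]; exists (`|c| * M) => n; rewrite normrM.
by apply: ler_wpM2l.
Qed.

Lemma Phi_cst Phi c : posfun Phi -> Phi (fun _ => c) = c.
Proof.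
case=> _ hZ _ h1; have := hZ c (fun _ => 1) (bnd_cst 1).
by rewrite h1 mulr1.
Qed.

Lemma Phi_sum Phi (I : Type) (r : seq I) (F : I -> nat -> R) :
  posfun Phi -> (forall i, bnd (F i)) ->
  Phi (fun n => \sum_(i <- r) F i n) = \sum_(i <- r) Phi (F i).
Proof.
move=> pP bF; elim: r => [|i r IH].
  rewrite big_nil; transitivity (Phi (fun _ => 0)); last exact: Phi_cst.
  by congr Phi; apply/funext => n /=; rewrite big_nil.
have bS : forall s, bnd (fun n => \sum_(j <- s) F j n).
  elim=> [|j s IHs]; first by under eq_fun do rewrite big_nil; exact: bnd_cst.
  under eq_fun do rewrite big_cons; exact: bndD.
rewrite big_cons -IH; case: pP => hD _ _ _; rewrite -hD //.
by congr Phi; apply/funext => n; rewrite big_cons.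
Qed.

Lemma PhiDc Phi u c : posfun Phi -> bnd u -> Phi (fun n => u n + c) = Phi u + c.
Proof.
move=> pP bu; have [hD _ _ _] := pP; rewrite hD ?Phi_cst //; exact: bnd_cst.
Qed.

Lemma prob_Phi Phi (nu : nat -> set T -> R) : posfun Phi -> (forall n, prob (nu n)) ->
  prob (fun E => Phi (fun n => nu n E)).
Proof.
move=> pP pn.
have b01 : forall E, measurable E -> bnd (fun n => nu n E).
  by move=> E mE; apply: bnd01 => n; rewrite prob_ge0 ?prob_le1.
have [hD hZ hM h1] := pP.
split.
- move=> A B mA mB AB /=; rewrite -hD; try exact: b01.
  congr Phi; apply/funext => n.
  by have [ad _ _] := pn n; rewrite ad.
- move=> A mA /=; rewrite -(Phi_cst _ 0 pP); apply: hM.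
  + exact: bnd_cst.
  + exact: b01.
  + by move=> n; rewrite prob_ge0.
- rewrite /= -h1; congr Phi; apply/funext => n; by have [_ _ ->] := pn n.
Qed.

Lemma integral01 {mu} f : prob mu -> (forall x, 0 <= f x <= 1) ->
  0 <= fa_integral mu f <= 1.
Proof.
move=> pm f01; apply/andP; split.
  apply: le_trans (@integral_lb mu _ _ (fun _ => 0) f pm f01 part1 _).
    by rewrite big_ord1 mul0r.
  by move=> _ x _; case/andP: (f01 x).
apply: le_trans (@integral_ub mu _ _ (fun _ => 1) f pm _ part1 _) _.
- by move=> x; case/andP: (f01 x).
- by move=> _ x _; case/andP: (f01 x).
by rewrite big_ord1 mul1r; have [_ _ ->] := pm.
Qed.

Lemma SN01 {mu} f N : prob mu -> (0 < N)%N -> measurable_fun setT f ->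
  (forall x, 0 <= f x <= 1) -> 0 <= SN f mu N <= 1.
Proof.
move=> pm N0 mf f01; have /andP[h1 h2] := SN_approx f N pm N0 mf f01.
have /andP[i0 i1] := integral01 f pm f01.
rewrite (le_trans h1 i1) andbT; apply: sumr_ge0 => k _.
apply: mulr_ge0; first by rewrite divr_ge0.
by have [mB _ _] := part_Bk f N N0 mf f01; rewrite prob_ge0.
Qed.

Lemma integral_Phi Phi (nu : nat -> set T -> R) mu f :
  posfun Phi -> (forall n, prob (nu n)) -> prob mu ->
  (forall E, measurable E -> mu E = Phi (fun n => nu n E)) ->
  measurable_fun setT f -> (forall x, 0 <= f x <= 1) ->
  fa_integral mu f = Phi (fun n => fa_integral (nu n) f).
Proof.
move=> pP pn pm hmu mf f01.
have [hD hZ hM h1] := pP.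
apply: eq_approx => N N0.
have [mB _ _] := part_Bk f N N0 mf f01.
have bB : forall k, bnd (fun n => nu n (Bk f N k)).
  by move=> k; apply: bnd01 => n; rewrite prob_ge0 ?prob_le1.
have hS : SN f mu N = Phi (fun n => SN f (nu n) N).
  rewrite /SN Phi_sum //; last by move=> k; exact: bndZ.
  by apply: eq_bigr => k _; rewrite hZ // hmu.
have bI : bnd (fun n => fa_integral (nu n) f).
  by apply: bnd01 => n; exact: integral01 f (pn n) f01.
have bSN : bnd (fun n => SN f (nu n) N).
  by apply: bnd01 => n; exact: SN01 f N (pn n) N0 mf f01.
have /andP[a1 a2] := SN_approx f N pm N0 mf f01.
split.
  apply: (le_trans a2); rewrite lerD2r hS; apply: hM => // n.
  by have /andP[] := SN_approx f N (pn n) N0 mf f01.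
apply: le_trans (_ : Phi (fun n => SN f (nu n) N + N%:R^-1) <= _).
  apply: hM => //; first by apply: bndD => //; exact: bnd_cst.
  by move=> n; have /andP[] := SN_approx f N (pn n) N0 mf f01.
by rewrite PhiDc // -hS lerD2r.
Qed.

Lemma part_prod (f g : T -> R) N : (0 < N)%N -> measurable_fun setT f ->
  measurable_fun setT g -> (forall x, 0 <= f x <= 1) -> (forall x, 0 <= g x <= 1) ->
  part (fun q : 'I_N.+1 * 'I_N.+1 => Bk f N q.1 `&` Bk g N q.2).
Proof.
move=> N0 mf mg f01 g01.
have [mF dF cF] := part_Bk f N N0 mf f01.
have [mG dG cG] := part_Bk g N N0 mg g01.
split.
- by move=> q; apply: measurableI.
- move=> [i1 i2] [j1 j2] /= ij; apply/seteqP; split => // x [[F1 G1] [F2 G2]].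
  case: (eqVneq i1 j1) => [e1|n1].
    case: (eqVneq i2 j2) => [e2|n2]; first by move: ij; rewrite e1 e2 eqxx.
    by have := dG _ _ n2; move/seteqP => [+ _] => /(_ x (conj G1 G2)).
  by have := dF _ _ n1; move/seteqP => [+ _] => /(_ x (conj F1 F2)).
- move=> x; have [i Fi] := cF x; have [j Gj] := cG x; by exists (i, j).
Qed.

Lemma prob_pair {mu} (f g : T -> R) N : prob mu -> (0 < N)%N -> measurable_fun setT f ->
  measurable_fun setT g -> (forall x, 0 <= f x <= 1) -> (forall x, 0 <= g x <= 1) ->
  \sum_(q : 'I_N.+1 * 'I_N.+1) ((q.1)%:R / N%:R + (q.2)%:R / N%:R) * mu (Bk f N q.1 `&` Bk g N q.2)
  = SN f mu N + SN g mu N.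
Proof.
move=> pm N0 mf mg f01 g01.
have [mF dF cF] := part_Bk f N N0 mf f01.
have [mG dG cG] := part_Bk g N N0 mg g01.
under eq_bigr do rewrite mulrDl.
rewrite big_split /=.
rewrite -(pair_big xpredT xpredT (fun (i j : 'I_N.+1) => i%:R / N%:R * mu (Bk f N i `&` Bk g N j))) /=.
rewrite -(pair_big xpredT xpredT (fun (i j : 'I_N.+1) => j%:R / N%:R * mu (Bk f N i `&` Bk g N j))) /=.
congr (_ + _).
  apply: eq_bigr => i _; rewrite -mulr_sumr; congr (_ * _).
  by rewrite (prob_sum _ (Bk g N) (Bk f N i) pm).
rewrite exchange_big /=; apply: eq_bigr => j _; rewrite -mulr_sumr; congr (_ * _).
rewrite (prob_sum _ (Bk f N) (Bk g N j) pm) //.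
by apply: eq_bigr => i _; rewrite setIC.
Qed.

Lemma integralD {mu} (f g : T -> R) : prob mu -> measurable_fun setT f ->
  measurable_fun setT g -> (forall x, 0 <= f x <= 1) -> (forall x, 0 <= g x <= 1) ->
  (forall x, 0 <= f x + g x <= 1) ->
  fa_integral mu (fun x => f x + g x) = fa_integral mu f + fa_integral mu g.
Proof.
move=> pm mf mg f01 g01 fg01.
apply: eq_approx => M M0.
set N := (2 * M)%N; have N0 : (0 < N)%N by rewrite muln_gt0.
have e : 2 * N%:R^-1 = M%:R^-1 :> R.
  rewrite /N natrM invfM mulrA divff ?mul1r //; exact: lt0r_neq0.
have pQ := part_prod f g N N0 mf mg f01 g01.
have hS := prob_pair f g N pm N0 mf mg f01 g01.
have /andP[f1 f2] := SN_approx f N pm N0 mf f01.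
have /andP[g1 g2] := SN_approx g N pm N0 mg g01.
have h1 : \sum_(q : 'I_N.+1 * 'I_N.+1) mu (Bk f N q.1 `&` Bk g N q.2) = 1.
  have [mQ dQ cQ] := pQ; have [_ _ <-] := pm; rewrite (prob_sum _ _ setT pm mQ dQ cQ measurableT).
  by apply: eq_bigr => q _; rewrite setTI.
split.
  apply: le_trans (@integral_ub mu _ _ (fun q : 'I_N.+1 * 'I_N.+1 =>
     (q.1)%:R / N%:R + (q.2)%:R / N%:R + 2 * N%:R^-1) _ pm _ pQ _) _.
  - by move=> x; case/andP: (fg01 x).
  - move=> [i j] x [/andP[_ fi] /andP[_ gj]] /=.
    apply: ltW; apply: (lt_le_trans (ltrD fi gj)).
    rewrite -!addn1 !natrD !mulrDl mul1r; lra.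
  under eq_bigr do rewrite mulrDl.
  rewrite big_split /= hS -mulr_sumr h1 mulr1 e.
  by rewrite lerD2r; apply: lerD.
apply: le_trans (_ : SN f mu N + SN g mu N + M%:R^-1 <= _).
  by rewrite -e; lra.
rewrite lerD2r -hS.
apply: (@integral_lb mu _ _ (fun q : 'I_N.+1 * 'I_N.+1 =>
     (q.1)%:R / N%:R + (q.2)%:R / N%:R) _ pm fg01 pQ).
by move=> [i j] x [/andP[fi _] /andP[gj _]] /=; apply: lerD.
Qed.

Section Trans.
Variable p : T -> set T -> R.
Hypothesis tp : transition_function p.

Lemma p_set0 x : p x set0 = 0.
Proof.
have [_ _ _ ca] := tp.
have := ca x (fun _ => set0) (fun _ => measurable0).
have triv : trivIset setT (fun _ : nat => @set0 T) by move=> i j _ _ [y [[] _]].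
move=> /(_ triv); rewrite bigcup0 // => h.
set c := p x set0 in h *.
have h1 : (fun n => \sum_(0 <= k < n.+1) c) @ \oo --> c.
  by rewrite (cvg_shiftS (fun n => \sum_(0 <= k < n) c)).
have h2 : (fun n => \sum_(0 <= k < n.+1) c) @ \oo --> c + c.
  have -> : (fun n => \sum_(0 <= k < n.+1) c) = (fun n => c + \sum_(0 <= k < n) c).
    by apply/funext => n; rewrite big_nat_recr //= addrC.
  by apply: cvgD => //; exact: cvg_cst.
have := cvg_lim (@Rhausdorff R) h1; rewrite (cvg_lim (@Rhausdorff R) h2).
clearbody c; move=> /(_ eventually_filter) hc; lra.
Qed.

Lemma p_add x E F : measurable E -> measurable F -> E `&` F = set0 ->
  p x (E `|` F) = p x E + p x F.
Proof.
move=> mE mF EF; have [_ _ _ ca] := tp.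
pose G n := if n == 0%N then E else if n == 1%N then F else set0.
have mG : forall n, measurable (G n).
  by move=> n; rewrite /G; case: ifP => // _; case: ifP.
have tG : trivIset setT G.
  move=> i j _ _ [y [Gi Gj]].
  move: Gi Gj; rewrite /G; case: i => [|[|i]] /=; case: j => [|[|j]] //=.
  - by move=> Ey Fy; move/seteqP: EF => [+ _] => /(_ y (conj Ey Fy)).
  - by move=> Fy Ey; move/seteqP: EF => [+ _] => /(_ y (conj Ey Fy)).
have := ca x G mG tG.
have -> : \bigcup_n G n = E `|` F.
  apply/seteqP; split => y.
    by move=> [n _]; rewrite /G; case: ifP => _; [left|case: ifP => _ //; right].
  by move=> [Ey|Fy]; [exists 0%N | exists 1%N].
move=> h.
have h2 : (fun n => \sum_(0 <= k < n) p x (G k)) @ \oo --> p x E + p x F.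
  apply: cvg_near_cst; exists 2%N => // n /= n2.
  rewrite big_ltn ?(leq_trans _ n2) // big_ltn ?(leq_trans _ n2) //.
  rewrite big_nat_cond big1 ?addr0 //.
  move=> k /andP[/andP[k2 _] _]; rewrite /G.
  case: k k2 => [|[|k]] // _; exact: p_set0.
by rewrite -(cvg_lim (@Rhausdorff R) h) (cvg_lim (@Rhausdorff R) h2).
Qed.

Lemma p01 x E : measurable E -> 0 <= p x E <= 1.
Proof. by have [h _ _ _] := tp; apply: h. Qed.

Lemma p_mf E : measurable E -> measurable_fun setT (fun x => p x E).
Proof. by have [_ _ h _] := tp; apply: h. Qed.

Lemma integral1 {mu} : prob mu -> fa_integral mu (fun _ => 1) = 1.
Proof.
move=> pm; have f01 : forall x : T, 0 <= (1 : R) <= 1 by move=> x; rewrite ler01 lexx.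
apply/le_anti; apply/andP; split; first by case/andP: (integral01 (fun _ => 1) pm f01).
apply: le_trans (@integral_lb mu _ _ (fun _ => 1) _ pm f01 part1 _).
  by rewrite big_ord1 mul1r; have [_ _ ->] := pm.
by [].
Qed.

Lemma markov_prob mu : prob mu -> prob (markov_op p mu).
Proof.
move=> pm; split.
- move=> A B mA mB AB; rewrite /markov_op.
  transitivity (fa_integral mu (fun x => p x A + p x B)).
    by congr fa_integral; apply/funext => x; rewrite p_add.
  apply: integralD => //; try (by apply: p_mf); try (by move=> x; apply: p01).
  by move=> x; rewrite -p_add //; apply: p01; exact: measurableU.
- by move=> A mA; rewrite /markov_op; case/andP: (integral01 (fun x => p x A) pm (fun x => p01 x A mA)).
- rewrite /markov_op; have [_ h _ _] := tp.
  transitivity (fa_integral mu (fun _ => 1)); last exact: integral1.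
  by congr fa_integral; apply/funext => x; rewrite h.
Qed.

Lemma markov_supp mu D D' : prob mu -> measurable D -> measurable D' ->
  mu D = 1 -> (forall x, D x -> p x D' = 1) -> markov_op p mu D' = 1.
Proof.
move=> pm mD mD' mu1 hp; rewrite /markov_op.
apply/le_anti; apply/andP; split; first by case/andP: (integral01 (fun x => p x D') pm (fun x => p01 x D' mD')).
have pQ : part (fun b : bool => if b then D else ~` D).
  split.
  - by case => //; exact: measurableC.
  - by case; case => //= _; rewrite ?setICr ?setCK ?setICl.
  - by move=> x; case: (pselect (D x)) => h; [exists true | exists false].
apply: le_trans (@integral_lb mu _ _ (fun b : bool => if b then 1 else 0) _ pm
   (fun x => p01 x D' mD') pQ _).
  by rewrite big_bool /= mul1r mul0r addr0 mu1.
case => x /= h; first by rewrite hp.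
by case/andP: (p01 x D' mD').
Qed.
End Trans.

Section Ultra.
Variable U : set_system nat.
Hypothesis UU : UltraFilter U.
Hypothesis Uoo : \oo `<=` U.

Lemma ultra_cvg (u : nat -> R) : bnd u -> u @ U --> lim (u @ U).
Proof.
move=> [M hM].
have cM := @segment_compact R (- M) M.
have Fs : (u @ U) [set` `[(- M : R), M]].
  apply: (@filterS _ U _ setT) => [n _|]; last exact: filterT.
  by rewrite /= in_itv /= -ler_norml; exact: hM.
have [l [_ cl]] := cM (u @ U) _ Fs.
apply: (cvgP l) => B nB /=.
case: (in_ultra_setVsetC (u @^-1` B) UU) => // nU.
have [z [nBz Bz]] := cl (~` B) B nU nB.
by [].
Qed.

Definition Lam (u : nat -> R) := lim (u @ U).

Lemma Lam_posfun : posfun Lam.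
Proof.
split.
- move=> u v bu bv; apply: cvg_lim; first exact: Rhausdorff.
  by apply: cvgD; apply: ultra_cvg.
- move=> c u bu; apply: cvg_lim; first exact: Rhausdorff.
  by apply: cvgM; [exact: cvg_cst | apply: ultra_cvg].
- move=> u v bu bv uv; apply: ler_lim; try (apply: cvgP; apply: ultra_cvg => //).
  exact: filterE.
- by apply: lim_cst; exact: Rhausdorff.
Qed.

Lemma Lam_tail (u : nat -> R) : u @ \oo --> 0 -> Lam u = 0.
Proof.
move=> hu; apply: cvg_lim; first exact: Rhausdorff.
by move=> B nB; apply: Uoo; exact: hu B nB.
Qed.
End Ultra.

Lemma prob_pos mu : prob mu -> positive_ba mu.
Proof.
move=> pm; have [ad h0 _] := pm; split => //; split => //.
by exists 1 => A mA; rewrite ger0_norm ?prob_ge0 ?prob_le1.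
Qed.

Lemma avg_posfun N : posfun (fun u : nat -> R => (N.+1%:R)^-1 * \sum_(j < N.+1) u j).
Proof.
split.
- by move=> u v _ _; rewrite big_split mulrDr.
- by move=> c u _; rewrite -mulr_sumr mulrCA.
- move=> u v _ _ uv; apply: ler_wpM2l; first by rewrite invr_ge0.
  by apply: ler_sum => j _.
- rewrite sumr_const card_ord -[1 *+ _]/(N.+1%:R) mulVf // pnatr_eq0.
Qed.
End Aux.

Theorem theorem4p5 (d : measure_display) (T : measurableType d) (R : realType)
    (p : T -> set T -> R) (m : nat) (D : nat -> set T) :
  infinite_set (@setT T) ->
  (forall x : T, measurable [set x]) ->
  transition_function p ->
  singular_cycle_sets p m D ->
  exists mu : nat -> set T -> R,
    [/\ singular_cycle_measures p m mu,
        (forall i, (i < m)%N -> S_ba (mu i))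
      & (forall i j, (i < m)%N -> (j < m)%N ->
           mu i (D j) = if i == j then 1 else 0)].
Proof.
move=> _ _ tp [[cD dist cyc] disj].
case: (posnP m) => [m0|m0].
  by exists (fun _ _ => 0); rewrite m0; split; [split; [split|]|..] => i.
have [mD0 [x0 Dx0]] := cD 0%N m0.
pose delta := fun E : set T => if `[< E x0 >] then (1:R) else 0.
have pdelta : prob delta.
  split.
  - move=> A B _ _ AB; rewrite /delta.
    have [Ax|nAx] := pselect (A x0); have [Bx|nBx] := pselect (B x0).
    + by move/seteqP: AB => [+ _] => /(_ x0 (conj Ax Bx)).
    + have ABx : (A `|` B) x0 by left.
      by rewrite (asboolT Ax) (asboolF nBx) (asboolT ABx) addr0.
    + have ABx : (A `|` B) x0 by right.
      by rewrite (asboolF nAx) (asboolT Bx) (asboolT ABx) add0r.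
    + have nABx : ~ (A `|` B) x0 by case.
      by rewrite (asboolF nAx) (asboolF nBx) (asboolF nABx) addr0.
  - by move=> A _; rewrite /delta; case: ifP.
  - by rewrite /delta asboolT.
pose nu n := iter n (markov_op p) delta.
have pnu : forall n, prob (nu n).
  by elim => //= n IH; apply: markov_prob.
have nuD : forall n, nu n (D (n %% m)%N) = 1.
  elim => [|n IH]; first by rewrite /= mod0n /delta asboolT.
  have nm := mathcomp.boot.div.ltn_pmod n m0.
  have e : ((n %% m).+1 %% m = n.+1 %% m)%N by rewrite -addn1 modnDml addn1.
  rewrite /= (@markov_supp _ _ _ p tp _ (D (n %% m)%N)) //.
  - by case: (cD _ nm).
  - by case: (cD _ (mathcomp.boot.div.ltn_pmod n.+1 m0)).
  - by move=> x Dx; rewrite -e; apply: cyc.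
pose avg N (u : nat -> R) := (N.+1%:R)^-1 * \sum_(j < N.+1) u j.
have pavg : forall N, posfun (avg N) by move=> N; exact: avg_posfun.
pose w i N E := avg N (fun j => nu (j * m + i)%N E).
have pw : forall i N, prob (w i N).
  by move=> i N; apply: (prob_Phi _ _ (pavg N) (fun j => pnu _)).
have Aw : forall i N E, measurable E -> markov_op p (w i N) E = w i.+1 N E.
  move=> i N E mE; rewrite /markov_op.
  rewrite (integral_Phi _ _ _ _ (pavg N) (fun j => pnu (j * m + i)%N) (pw i N)) //.
  - by rewrite /w; congr (avg N); apply/funext => j; rewrite addnS.
  - exact: (p_mf p tp E mE).
  - by move=> x; apply: (p01 p tp x E mE).
have [U [UU Uoo]] := ultraFilterLemma (F := \oo : set_system nat) eventually_filter.
have pLam : posfun (Lam U : (nat -> R) -> R) := Lam_posfun _ UU.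
pose mus i E := Lam U (fun N => w i N E).
have pmus : forall i, prob (mus i).
  by move=> i; apply: (prob_Phi _ _ pLam (fun N => pw i N)).
have Amus : forall i E, measurable E -> markov_op p (mus i) E = mus i.+1 E.
  move=> i E mE; rewrite /markov_op.
  rewrite (integral_Phi _ _ _ _ pLam (fun N => pw i N) (pmus i)) //.
  - by rewrite /mus; congr (Lam U); apply/funext => N; exact: Aw.
  - exact: (p_mf p tp E mE).
  - by move=> x; apply: (p01 p tp x E mE).
have bw : forall i E, measurable E -> bnd (fun N => w i N E).
  by move=> i E mE; apply: bnd01 => N; rewrite prob_ge0 ?prob_le1.
have mus_m : forall E, measurable E -> mus m E = mus 0%N E.
  move=> E mE; rewrite /mus.
  have -> : (fun N => w m N E) = (fun N => w 0%N N E + (w m N E - w 0%N N E)).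
    by apply/funext => N; rewrite addrC subrK.
  have [hD _ _ _] := pLam.
  have b2 : bnd (fun N => w m N E - w 0%N N E).
    apply: bndD; first exact: bw.
    by have [M hM] := bw 0%N E mE; exists M => n; rewrite normrN.
  rewrite (hD _ _ (bw 0%N E mE) b2).
  rewrite [X in _ + X](Lam_tail _ UU Uoo) ?addr0 //.
  pose a j := nu (j * m)%N E.
  have ha : forall N, w m N E - w 0%N N E = (N.+1%:R)^-1 * (a N.+1 - a 0%N).
    move=> N; rewrite /w /avg -mulrBr; congr (_ * _).
    rewrite (eq_bigr (fun j : 'I_N.+1 => a j.+1)); last first.
      by move=> j _; rewrite /a mulSn addnC.
    rewrite (eq_bigr (fun j : 'I_N.+1 => a j) (fun j _ => congr1 (fun k => nu k E) (addn0 _))).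
    rewrite big_ord_recr big_ord_recl /=.
    have -> : \sum_(i < N) a (bump 0 i) = \sum_(i < N) a i.+1.
      by apply: eq_bigr => i _; rewrite /bump add1n.
    set S := \sum_(i < N) _; lra.
  apply: (@squeeze_cvgr _ _ _ _ (fun N => - (harmonic N)) harmonic).
  - apply: filterE => N; rewrite ha /=.
    have a0 := prob_ge0 _ (pnu (0 * m)%N) mE; have a1 := prob_le1 _ (pnu (0 * m)%N) mE.
    have b0 := prob_ge0 _ (pnu (N.+1 * m)%N) mE; have b1 := prob_le1 _ (pnu (N.+1 * m)%N) mE.
    have t0 : 0 < (N.+1%:R : R)^-1 by rewrite invr_gt0 ltr0n.
    rewrite /a; set t := (N.+1%:R : R)^-1 in t0 *; clearbody t.
    apply/andP; split; nra.
  - by rewrite -oppr0; apply: cvgN; exact: cvg_harmonic.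
  - exact: cvg_harmonic.
have musD : forall i, (i < m)%N -> mus i (D i) = 1.
  move=> i im; rewrite /mus.
  have mDi : measurable (D i) by case: (cD i im).
  transitivity (Lam U (fun _ => 1 : R)); last exact: Phi_cst.
  congr (Lam U); apply/funext => N; rewrite /w.
  transitivity (avg N (fun _ => 1 : R)); last exact: Phi_cst.
  congr (avg N); apply/funext => j.
  by have := nuD (j * m + i)%N; rewrite modnMDl modn_small.
have musD0 : forall i j, (i < m)%N -> (j < m)%N -> i != j -> mus i (D j) = 0.
  move=> i j im jm ij.
  have mDi : measurable (D i) by case: (cD i im).
  have mDj : measurable (D j) by case: (cD j jm).
  have [ad _ _] := pmus i.
  have := prob_le1 _ (pmus i) (measurableU _ _ mDi mDj).
  rewrite ad // ?disj // musD // => h.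
  have := prob_ge0 _ (pmus i) mDj; lra.
exists mus; split.
- split.
  + split.
    * by move=> i _; apply: prob_pos.
    * move=> i j im jm ij meqij.
      have mDi : measurable (D i) by case: (cD i im).
      have := meqij (D i) mDi; rewrite musD // musD0 //; last by rewrite eq_sym.
      by move/eqP; rewrite oner_eq0.
    * move=> i im E mE; rewrite Amus //.
      case: (ltngtP i.+1 m) => [lt|gt|->].
      - by rewrite modn_small.
      - by move: gt; rewrite ltnS leqNgt im.
      - by rewrite modnn mus_m.
  + move=> i j im jm ij; exists (D i), (D j).
    have mDi : measurable (D i) by case: (cD i im).
    have mDj : measurable (D j) by case: (cD j jm).
    have [_ _ ti] := pmus i; have [_ _ tj] := pmus j.
    by split => //; [exact: disj | rewrite musD // ti | rewrite musD // tj].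
- move=> i im; split; first exact: prob_pos.
  by have [_ _ ->] := pmus i.
- move=> i j im jm; case: eqP => [<-|/eqP ij]; first exact: musD.
  exact: musD0.
Qed.
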